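(* Let $R$ be a strongly $\pi$-$*$-regular ring and $e$ an idempotent of $R$. Then $eRe$, with the involution restricted from $R$, is strongly $\pi$-$*$-regular.
   Context: A $*$-ring is a ring with identity with an involution $*$. A projection is $p$ with $p^2=p=p^*$. A $*$-ring is strongly $\pi$-$*$-regular if for every $a$ there exist a projection $e'$, a unit $u$ and $m\ge1$ with $a^m=e'u$ and $a,e',u$ pairwise commuting. (In such a ring every idempotent is a projection, so $(eRe)^*=eRe$ and $eRe$ is a $*$-ring with identity $e$.) *)

(* Defs.v *)
From HB Require Import structures.
From mathcomp Require Import all_boot all_order all_algebra.
Set Implicit Arguments. Unset Strict Implicit. Unset Printing Implicit Defensive.
Import GRing.Theory.
Local Open Scope ring_scope.

Definition is_involution (R : pzRingType) (s : R -> R) : Prop :=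
  [/\ forall x y : R, s (x + y) = s x + s y,
      forall x y : R, s (x * y) = s y * s x
    & forall x : R, s (s x) = x].

Definition in_corner (R : pzRingType) (e x : R) : Prop := e * x * e = x.

(* A unit of eRe is an element u
   of eRe with some v in eRe such that u v = v u = e; a projection of eRe is
   p in eRe with p^2 = p = s p.  Powers a^m with m >= 1 are the same in eRe
   and in R. *)
Definition spistar_on (R : pzRingType) (s : R -> R) (e : R) : Prop :=
  forall a : R, in_corner e a ->
    exists (p u v : R) (m : nat),
      [/\ [/\ in_corner e p, p * p = p & s p = p],
          [/\ in_corner e u, in_corner e v, u * v = e & v * u = e],
          (0 < m)%N, a ^+ m = p * u
        & [/\ a * p = p * a, a * u = u * a & p * u = u * p]].

Definition spistar (R : pzRingType) (s : R -> R) : Prop := spistar_on s 1.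

(* Main.v *)
Require Import Defs.
From HB Require Import structures.
From mathcomp Require Import all_boot all_order all_algebra.
Local Open Scope ring_scope.
Import GRing.Theory.

Lemma idem_pow (R : pzRingType) (e : R) m : e * e = e -> (0 < m)%N -> e ^+ m = e.
Proof.
move=> He; case: m => // m _; elim: m => [|m IH]; first by rewrite expr1.
by rewrite exprS IH He.
Qed.

Lemma corner_l (R : pzRingType) (e a : R) : e * e = e -> in_corner e a -> e * a = a.
Proof. by rewrite /in_corner => He Ha; rewrite -{1}Ha !mulrA He. Qed.

Lemma corner_r (R : pzRingType) (e a : R) : e * e = e -> in_corner e a -> a * e = a.
Proof. by rewrite /in_corner => He Ha; rewrite -{1}Ha -mulrA He. Qed.

Theorem corollary3p10 (R : pzRingType) (s : R -> R) (e : R) :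
  is_involution s -> spistar s -> e * e = e ->
  (forall x : R, in_corner e x -> in_corner e (s x)) /\ spistar_on s e.
Proof.
move=> [sD sM sK] Hs He.
have se : s e = e.
  have [p [u [v [m [[_ pp sp] [_ _ uv vu] m0 Hm [ep eu pu]]]]]] := Hs e (ltac:(by rewrite /in_corner mul1r mulr1)).
  rewrite idem_pow // in Hm.
  have E : e * e = p * u * u by rewrite Hm -mulrA (mulrA u) -pu !mulrA pp.
  have Hpu : p * u * u = p * u by rewrite -E He Hm.
  have Hp : p * u = p by rewrite -(mulr1 (p * u)) -uv mulrA Hpu -mulrA uv mulr1.
  by rewrite Hm Hp.
split.
  by move=> x Hx; rewrite /in_corner -{2}Hx !sM se mulrA.
move=> a Ha.
have [p [u [v [m [[_ pp sp] [_ _ uv vu] m0 Hm [ap au pu]]]]]] := Hs a (ltac:(by rewrite /in_corner mul1r mulr1)).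
have ea := @corner_l _ _ _ He Ha. have ae := @corner_r _ _ _ He Ha.
have eam : e * a ^+ m = a ^+ m by case: m m0 {Hm} => // m _; rewrite exprS mulrA ea.
have ame : a ^+ m * e = a ^+ m by case: m m0 {Hm eam} => // m _; rewrite exprSr -mulrA ae.
have vp : v * p = p * v by rewrite -[v * p]mulr1 -uv !mulrA -(mulrA v) pu !mulrA vu mul1r.
have pE1 : a ^+ m * v = p by rewrite Hm -mulrA uv mulr1.
have pE2 : v * a ^+ m = p by rewrite Hm mulrA vp -mulrA vu mulr1.
have ep : e * p = p by rewrite -pE1 mulrA eam.
have pe : p * e = p by rewrite -pE2 -mulrA ame.
have amp : a ^+ m * p = a ^+ m by rewrite Hm -mulrA -pu mulrA pp.
have pam : p * a ^+ m = a ^+ m by rewrite Hm mulrA pp.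
have pve : p * v * e = p * v by rewrite -vp -mulrA pe.
exists p, (a ^+ m + (e - p)), (p * v + (e - p)), m.
have epp : (e - p) * (e - p) = e - p.
  by rewrite mulrBl !mulrBr He ep pe pp subrr subr0.
split => //.
- by split => //; rewrite /in_corner -mulrA pe ep.
- split.
  + by rewrite /in_corner !(mulrDr, mulrDl, mulrBr, mulrBl, mulrN, mulNr) ?(He, ep, pe, eam, ame).
  + by rewrite /in_corner !(mulrDr, mulrDl, mulrBr, mulrBl, mulrN, mulNr) ?(He, ep, pe, eam, ame) mulrA ep pve.
  + by rewrite !(mulrDr, mulrDl, mulrBr, mulrBl, mulrN, mulNr) !mulrA ?(amp, ep, pe, pp, He, ame) pE1 !subrr ?addr0 ?subr0 (addrC (a ^+ m)) addrK addrC subrK.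
  + by rewrite !(mulrDr, mulrDl, mulrBr, mulrBl, mulrN, mulNr) -!mulrA pE2 pp vp !mulrA pp pve ?(ep, pe, pp, He, eam, pam) !subrr ?addr0 ?subr0 (addrC (p * v)) addrK addrC subrK.
- by rewrite !(mulrDr, mulrDl, mulrBr, mulrBl, mulrN, mulNr) ?(pam, pe, pp) !subrr ?addr0.
- split; first by [].
  + by rewrite !(mulrDr, mulrDl, mulrBr, mulrBl, mulrN, mulNr) ?(ae, ea, ap) -exprSr -exprS.
  + by rewrite !(mulrDr, mulrDl, mulrBr, mulrBl, mulrN, mulNr) ?(pam, amp, pe, ep, pp).
Qed.
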